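(* Let $n\ge 8$ be an even integer and let $W_{3,n}$ be the $3$-regular Kn\''odel graph. Then $W_{3,n}$ is $\gamma$-stable if and only if $n\not\equiv 4 \pmod 8$.
   Context: For an even integer $n\ge 2$ and $1\le\Delta\le\lfloor\log_2 n\rfloor$, the Kn\''odel graph $W_{\Delta,n}$ is the $\Delta$-regular bipartite graph on the $n$ vertices $(i,j)$, $i\in\{1,2\}$, $0\le j\le n/2-1$, in which for every $j$ the vertex $(1,j)$ is adjacent to the vertices $(2,(j+2^k-1)\bmod (n/2))$ for $k=0,1,\dots,\Delta-1$ (and there are no other edges); in particular $W_{3,n}$ is defined for even $n\ge 8$. A set $D$ of vertices of a graph $G$ is dominating if every vertex not in $D$ is adjacent to a vertex of $D$; $\gamma(G)$ is the minimum size of a dominating set. A graph $G$ is $\gamma$-stable (domination vertex stable) if $\gamma(G-u)=\gamma(G)$ for every vertex $u$ of $G$, where $G-u$ is the graph obtained by deleting $u$. *)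

(* Defs.v *)
From mathcomp Require Import all_boot.
Set Implicit Arguments. Unset Strict Implicit. Unset Printing Implicit Defensive.

(* Graphs: a vertex set V : {set T} on a finType T with adjacency relation e.
   The graph induced on V has vertices V and edges e restricted to V. *)

Definition dominating (T : finType) (e : rel T) (V D : {set T}) : bool :=
  (D \subset V) && [forall v in V :\: D, [exists d in D, e v d]].

(* Domination number: minimum size of a dominating set (V itself dominates). *)
Definition gamma_on (T : finType) (e : rel T) (V : {set T}) : nat :=
  \big[minn/#|V|]_(D : {set T} | dominating e V D) #|D|.

Definition gamma_stable (T : finType) (e : rel T) (V : {set T}) : Prop :=
  forall u, u \in V -> gamma_on e (V :\ u) = gamma_on e V.

(* Knodel graph W_{Delta,n}: vertices (i,j), i in {1,2} (encoded as false/true),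
   j in 'I_(n/2).  (1,j) ~ (2,(j + 2^k - 1) mod (n/2)) for k = 0..Delta-1. *)
Definition knodel_vertex (n : nat) := (bool * 'I_(n./2))%type.

Definition knodel_half_adj (n Delta : nat) (a b : nat) : bool :=
  (* a = index of side-1 vertex, b = index of side-2 vertex *)
  [exists k : 'I_Delta, b == (a + 2 ^ k - 1) %% n./2].

Arguments knodel_half_adj : clear implicits.
Definition knodel_adj (n Delta : nat) : rel (knodel_vertex n) :=
  fun x y =>
    match x.1, y.1 with
    | false, true => knodel_half_adj n Delta x.2 y.2
    | true, false => knodel_half_adj n Delta y.2 x.2
    | _, _ => false
    end.
Arguments knodel_adj : clear implicits.

(* Main.v *)
Require Import Defs.
From mathcomp Require Import all_boot zify.
Set Implicit Arguments. Unset Strict Implicit. Unset Printing Implicit Defensive.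

Lemma gamma_le (T : finType) (e : rel T) (V D : {set T}) :
  dominating e V D -> gamma_on e V <= #|D|.
Proof.
move=> HD; rewrite /gamma_on.
have: D \in index_enum {set T} by rewrite mem_index_enum.
elim: (index_enum _) => [//|a r IH]; rewrite inE big_cons => /orP[/eqP<-|/IH h].
  by rewrite HD geq_minl.
by case: (dominating e V a) => //; exact: leq_trans (geq_minr _ _) h.
Qed.

Lemma gamma_ge (T : finType) (e : rel T) (V : {set T}) c :
  c <= #|V| -> (forall D, dominating e V D -> c <= #|D|) -> c <= gamma_on e V.
Proof.
move=> HV HD; rewrite /gamma_on; elim/big_ind: _ => //.
- by move=> x y; rewrite leq_min => -> ->.
Qed.

Lemma domP (T : finType) (e : rel T) (V D : {set T}) :
  D \subset V -> (forall v, v \in V -> v \in D \/ exists2 d, d \in D & e v d) ->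
  dominating e V D.
Proof.
move=> sDV H; rewrite /dominating sDV /=; apply/forall_inP => v /setDP [vV vD].
case: (H v vV) => [vD'|[d dD ed]]; first by rewrite vD' in vD.
by apply/exists_inP; exists d.
Qed.

Lemma domE (T : finType) (e : rel T) (V D : {set T}) v : dominating e V D -> v \in V ->
  v \in D \/ exists2 d, d \in D & e v d.
Proof.
case/andP=> _ /forall_inP H vV; case vD: (v \in D); [by left | right].
have /H/exists_inP[d dD ed] : v \in V :\: D by rewrite inE vD vV.
by exists d.
Qed.

Lemma card_sum (T : finType) (A : {set T}) (P : pred T) :
  #|[set x in A | P x]| = \sum_(x in A) P x.
Proof.
rewrite -sum1_card big_mkcond /= [RHS]big_mkcond /=.
by apply: eq_bigr => x _; rewrite inE; case: (x \in A); case: (P x).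
Qed.

Lemma dcount (T : finType) (e : rel T) (V D : {set T}) :
  \sum_(v in V) #|[set d in D | (v == d) || e v d]| =
  \sum_(d in D) #|[set v in V | (v == d) || e v d]|.
Proof.
under eq_bigr do rewrite card_sum.
under [RHS]eq_bigr do rewrite card_sum.
exact: exchange_big.
Qed.

Lemma dom_ge1 (T : finType) (e : rel T) (V D : {set T}) v : dominating e V D -> v \in V ->
  0 < #|[set d in D | (v == d) || e v d]|.
Proof.
move=> HD vV; apply/card_gt0P.
case: (domE HD vV) => [vD|[d dD ed]].
- by exists v; rewrite inE vD eqxx.
- by exists d; rewrite inE dD ed orbT.
Qed.

Lemma dom_count (T : finType) (e : rel T) (V D : {set T}) :
  (forall d, #|[set v | (v == d) || e v d]| <= 4) -> dominating e V D ->
  #|V| <= 4 * #|D|.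
Proof.
move=> H4 HD.
apply: (@leq_trans (\sum_(v in V) #|[set d in D | (v == d) || e v d]|)).
  rewrite -sum1_card; apply: leq_sum => v vV; exact: dom_ge1 HD vV.
rewrite dcount mulnC -sum_nat_const; apply: leq_sum => d _.
apply: leq_trans (H4 d); apply: subset_leq_card; apply/subsetP => v.
by rewrite !inE => /andP[].
Qed.

Lemma dom_exact (T : finType) (e : rel T) (D : {set T}) :
  (forall d, #|[set v | (v == d) || e v d]| <= 4) -> dominating e setT D ->
  #|T| = 4 * #|D| -> forall v, #|[set d in D | (v == d) || e v d]| <= 1.
Proof.
move=> H4 HD HT v0; rewrite leqNgt; apply/negP => H2.
set f := fun v => #|[set d in D | (v == d) || e v d]|.
have Hs : \sum_(v in [set: T]) f v <= #|T|.
  rewrite /f dcount HT mulnC -sum_nat_const; apply: leq_sum => d _.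
  apply: leq_trans (H4 d); apply: subset_leq_card; apply/subsetP => v.
  by rewrite !inE.
have Hf : forall v, 0 < f v by move=> v; exact: dom_ge1 HD (in_setT v).
have : \sum_(v in [set: T]) f v = \sum_(v in [set: T]) 1 + \sum_(v in [set: T]) (f v - 1).
  rewrite -big_split /=; apply: eq_bigr => v _; rewrite subnKC //; exact: Hf.
rewrite sum1_card cardsT => E.
have : f v0 - 1 <= \sum_(v in [set: T]) (f v - 1).
  by rewrite (bigD1 v0) ?in_setT //= leq_addr.
move: Hs; rewrite E; move: H2; rewrite -/(f v0); lia.
Qed.

Lemma two_in (T : finType) (S : {set T}) a b :
  a != b -> a \in S -> b \in S -> 2 <= #|S|.
Proof.
move=> ab aS bS; have <- : #|[set a; b]| = 2 by rewrite cards2 ab.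
apply: subset_leq_card.
by apply/subsetP => x; rewrite !inE => /orP[] /eqP ->.
Qed.

Definition om (n : nat) (H : 0 < n./2) (i : nat) : 'I_(n./2) := Ordinal (ltn_pmod i H).
Definition Av n (H : 0 < n./2) i : knodel_vertex n := (false, om H i).
Definition Bv n (H : 0 < n./2) i : knodel_vertex n := (true, om H i).
Definition sh n (H : 0 < n./2) s (x : knodel_vertex n) : knodel_vertex n := (x.1, om H (x.2 + s)).

Lemma om_val n (H : 0 < n./2) (a : 'I_(n./2)) : om H a = a.
Proof. by apply: val_inj; rewrite /= modn_small. Qed.

Lemma om_eq n (H : 0 < n./2) i j : i = j %[mod n./2] -> om H i = om H j.
Proof. by move=> E; apply: val_inj. Qed.

Lemma Av_eq n (H : 0 < n./2) i j : i = j %[mod n./2] -> Av H i = Av H j.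
Proof. by move=> E; rewrite /Av (om_eq H E). Qed.
Lemma Bv_eq n (H : 0 < n./2) i j : i = j %[mod n./2] -> Bv H i = Bv H j.
Proof. by move=> E; rewrite /Bv (om_eq H E). Qed.

Lemma Av_inj n (H : 0 < n./2) i j : Av H i = Av H j -> i = j %[mod n./2].
Proof. by move=> E; have := congr1 (fun x : knodel_vertex n => nat_of_ord x.2) E. Qed.
Lemma Bv_inj n (H : 0 < n./2) i j : Bv H i = Bv H j -> i = j %[mod n./2].
Proof. by move=> E; have := congr1 (fun x : knodel_vertex n => nat_of_ord x.2) E. Qed.

Lemma AvE n (H : 0 < n./2) (a : 'I_(n./2)) : (false, a) = Av H a.
Proof. by rewrite /Av om_val. Qed.
Lemma BvE n (H : 0 < n./2) (a : 'I_(n./2)) : (true, a) = Bv H a.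
Proof. by rewrite /Bv om_val. Qed.

Definition adjM m i j := [|| j == i %[mod m], j == i + 1 %[mod m] | j == i + 3 %[mod m]].

Lemma half_adjE n (a b : nat) :
  knodel_half_adj n 3 (a %% n./2) (b %% n./2) = adjM n./2 a b.
Proof.
rewrite /knodel_half_adj /adjM; apply/existsP/idP => [[k]|].
  case: k => [[|[|[|//]]] ?] /=; rewrite -addnBA ?expn_gt0 // modnDml => h.
  - by rewrite addn0 in h; rewrite h.
  - by rewrite h orbT.
  - by rewrite h !orbT.
case/or3P => h; [exists ord0 | exists (Ordinal (isT : 1 < 3)) | exists (Ordinal (isT : 2 < 3))];
  by rewrite /= -addnBA ?expn_gt0 // modnDml ?addn0.
Qed.

Lemma adjAB n (H : 0 < n./2) i j : knodel_adj n 3 (Av H i) (Bv H j) = adjM n./2 i j.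
Proof. exact: half_adjE. Qed.
Lemma adjBA n (H : 0 < n./2) i j : knodel_adj n 3 (Bv H j) (Av H i) = adjM n./2 i j.
Proof. exact: half_adjE. Qed.
Lemma adjAA n (H : 0 < n./2) i (y : knodel_vertex n) : y.1 = false -> knodel_adj n 3 (Av H i) y = false.
Proof. by case: y => [[] b]. Qed.
Lemma adjBB n (H : 0 < n./2) i (y : knodel_vertex n) : y.1 = true -> knodel_adj n 3 (Bv H i) y = false.
Proof. by case: y => [[] b]. Qed.

Lemma sh_adj n (H : 0 < n./2) s x y :
  knodel_adj n 3 (sh H s x) (sh H s y) = knodel_adj n 3 x y.
Proof.
case: x y => [[] a] [[] b] //=; rewrite /knodel_half_adj; apply: eq_existsb => k /=;
 rewrite -!addnBA ?expn_gt0 // modnDml addnAC.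
- by rewrite eqn_modDr (modn_small (ltn_ord a)).
- by rewrite eqn_modDr (modn_small (ltn_ord b)).
Qed.

Lemma sh_inj n (H : 0 < n./2) s : injective (sh H s).
Proof.
move=> [b1 a1] [b2 a2] [-> /eqP E]; congr pair; apply: val_inj => /=.
move: E; rewrite eqn_modDr !modn_small //; by move/eqP.
Qed.

Lemma card_U3 (T : finType) (x : T) (f : 'I_3 -> T) :
  #|x |: [set f k | k : 'I_3]| <= 4.
Proof.
rewrite cardsU1; apply: (@leq_add _ _ 1 3); first by case: (x \notin _).
by apply: leq_trans (leq_imset_card _ _) _; rewrite card_ord.
Qed.

Lemma nb4 n (H : 0 < n./2) (H4 : 4 <= n./2) (d : knodel_vertex n) :
  #|[set v | (v == d) || knodel_adj n 3 v d]| <= 4.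
Proof.
case: d => [[] b].
- apply: leq_trans (card_U3 (true, b) (fun k : 'I_3 => Av H (b + n./2 - (2 ^ k - 1)))).
  apply: subset_leq_card; apply/subsetP => -[[] a]; rewrite !inE /knodel_adj /knodel_half_adj /=;
    first by case/orP=> [->|].
  case/existsP => k /eqP hk; apply/imsetP; exists k => //.
  rewrite (AvE H); apply: Av_eq; apply/eqP.
  have hc : 2 ^ k - 1 <= b + n./2.
    apply: leq_trans (leq_addl _ _); apply: leq_trans H4.
    by case: k {hk} => [[|[|[|]]] ?].
  rewrite -(eqn_modDr (2 ^ k - 1)) subnK // modnDr addnBA ?expn_gt0 // -hk.
  by rewrite !modn_small.
- apply: leq_trans (card_U3 (false, b) (fun k : 'I_3 => Bv H (b + (2 ^ k - 1)))).
  apply: subset_leq_card; apply/subsetP => -[[] a]; rewrite !inE /knodel_adj /knodel_half_adj /=;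
    last by case/orP=> [->|].
  case/existsP => k /eqP hk; apply/imsetP; exists k => //.
  rewrite (BvE H); apply: Bv_eq.
  by rewrite modn_small // hk addnBA ?expn_gt0.
Qed.

Lemma sh_dom n (H : 0 < n./2) s (D : {set knodel_vertex n}) :
  dominating (knodel_adj n 3) setT D -> dominating (knodel_adj n 3) setT (sh H s @: D).
Proof.
move=> HD; apply: domP; first exact: subsetT.
move=> [b i] _; set w : knodel_vertex n := (b, om H (i + (n./2 - s %% n./2))).
have Ew : sh H s w = (b, i).
  congr pair; apply: val_inj => /=.
  rewrite modnDml -(modnDmr (i + (n./2 - s %% n./2)) s) -addnA subnK.
    by rewrite modnDr modn_small.
  exact: ltnW (ltn_pmod _ H).
case: (domE HD (in_setT w)) => [wD|[d dD ed]].
  by left; rewrite -Ew; exact: imset_f.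
by right; exists (sh H s d); [exact: imset_f | rewrite -Ew sh_adj].
Qed.

Lemma sh_avoid n (H : 0 < n./2) (H2 : 2 <= n./2) (D : {set knodel_vertex n}) :
  (forall b, (b, om H 1) \notin D) ->
  forall u, exists s, u \notin sh H s @: D.
Proof.
move=> HD [b i]; exists (i + (n./2 - 1)).
have -> : (b, i) = sh H (i + (n./2 - 1)) (b, om H 1).
  congr pair; apply: val_inj => /=.
  rewrite (modn_small (H2 : 1 < n./2)) addnCA subnKC ?modnDr ?modn_small //.
by rewrite mem_imset //; exact: sh_inj.
Qed.

Lemma dom_del n (D : {set knodel_vertex n}) u :
  dominating (knodel_adj n 3) setT D -> u \notin D ->
  dominating (knodel_adj n 3) (setT :\ u) D.
Proof.
move=> HD uD; apply: domP.
  by apply/subsetP => x xD; rewrite !inE andbT; apply: contraNneq uD => <-.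
by move=> v /setD1P [_ vT]; exact: domE HD vT.
Qed.

Lemma card_V n : #|[set: knodel_vertex n]| = 2 * n./2.
Proof. by rewrite cardsT card_prod card_bool card_ord. Qed.

Lemma card_Vu n (u : knodel_vertex n) : #|[set: knodel_vertex n] :\ u| = (2 * n./2).-1.
Proof. by rewrite -card_V (cardsD1 u [set: _]) in_setT. Qed.

Lemma nbBA n (H : 0 < n./2) i j : [|| j == i, j == i + 1 | j == i + 3] ->
  knodel_adj n 3 (Bv H j) (Av H i).
Proof. by rewrite adjBA /adjM => /or3P [] /eqP ->; rewrite eqxx ?orbT. Qed.
Lemma nbAB n (H : 0 < n./2) i j : [|| j == i, j == i + 1 | j == i + 3] ->
  knodel_adj n 3 (Av H i) (Bv H j).
Proof. by rewrite adjAB /adjM => /or3P [] /eqP ->; rewrite eqxx ?orbT. Qed.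

Lemma modsub m a j c : c <= j -> j == a + c %[mod m] -> a = j - c %[mod m].
Proof. by move=> hc /eqP h; apply/eqP; rewrite -(eqn_modDr c) subnK // h. Qed.

Lemma nbB n (H : 0 < n./2) j d : 3 <= j ->
  (Bv H j == d) || knodel_adj n 3 (Bv H j) d ->
  [\/ d = Bv H j, d = Av H j, d = Av H (j - 1) | d = Av H (j - 3)].
Proof.
move=> hj; case: d => [[] a].
  by case/orP => [/eqP <-|]; [apply: Or41 | rewrite /Bv /knodel_adj].
rewrite (AvE H a) /Bv /Av orFb -/(Bv H j) -/(Av H a) adjBA /adjM.
case/or3P => h.
- by apply: Or42; apply: Av_eq; apply/eqP; rewrite eq_sym.
- by apply: Or43; apply: Av_eq; apply: modsub => //; lia.
- by apply: Or44; apply: Av_eq; apply: modsub => //; lia.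
Qed.

Lemma neqA n (H : 0 < n./2) j c c' : c < n./2 -> c' < n./2 -> c != c' ->
  Av H (j + c) != Av H (j + c').
Proof.
move=> hc hc' ne; apply/eqP => /Av_inj /eqP; rewrite eqn_modDl !modn_small //.
by apply/negP.
Qed.
Lemma neqB n (H : 0 < n./2) j c c' : c < n./2 -> c' < n./2 -> c != c' ->
  Bv H (j + c) != Bv H (j + c').
Proof.
move=> hc hc' ne; apply/eqP => /Bv_inj /eqP; rewrite eqn_modDl !modn_small //.
by apply/negP.
Qed.
Lemma neqAB n (H : 0 < n./2) i j : Av H i != Bv H j.
Proof. by []. Qed.

Lemma domex (T : finType) (e : rel T) (D : {set T}) : dominating e setT D ->
  forall v, exists2 d, d \in D & (v == d) || e v d.
Proof.
move=> HD v; case: (domE HD (in_setT v)) => [vD|[d dD ed]].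
  by exists v; rewrite ?eqxx.
by exists d; rewrite ?ed ?orbT.
Qed.

Lemma no_perfect n (H : 0 < n./2) k (Hm : n./2 = 4 * k + 2) (Hk : 1 <= k)
  (D : {set knodel_vertex n}) :
  dominating (knodel_adj n 3) setT D -> #|[set: knodel_vertex n]| = 4 * #|D| -> False.
Proof.
move=> HD; rewrite cardsT => HT.
have H4 : 4 <= n./2 by lia.
have ex1 := dom_exact (nb4 H H4) HD HT.
have two : forall v d1 d2, d1 != d2 -> d1 \in D -> d2 \in D ->
    (v == d1) || knodel_adj n 3 v d1 -> (v == d2) || knodel_adj n 3 v d2 -> False.
  move=> v d1 d2 ne h1 h2 a1 a2.
  have := two_in (S := [set d in D | (v == d) || knodel_adj n 3 v d]) ne.
  rewrite !inE h1 h2 a1 a2 => /(_ isT isT) h; by have := leq_trans h (ex1 v).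
have dx := domex HD.
have lt m' : m' <= 5 -> m' < n./2 by lia.
have no2 i : Av H i \in D -> Av H (i + 2) \notin D.
  move=> xi; apply/negP => xi2.
  apply: (two (Bv H (i + 3)) (Av H i) (Av H (i + 2))) => //.
  - by have := @neqA n H i 0 2 (lt 0 isT) (lt 2 isT) isT; rewrite addn0.
  - by apply/orP; right; apply: nbBA; lia.
  - by apply/orP; right; apply: nbBA; lia.
have down j : Av H (j + 4) \in D -> Av H j \in D.
  move=> x4.
  have n3 : Av H (j + 3) \notin D.
    apply/negP => x3; apply: (two (Bv H (j + 4)) (Av H (j + 4)) (Av H (j + 3))) => //.
    - by apply: neqA; lia.
    - by apply/orP; right; apply: nbBA; lia.
    - by apply/orP; right; apply: nbBA; lia.
  have n1 : Av H (j + 1) \notin D.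
    apply/negP => x1; apply: (two (Bv H (j + 4)) (Av H (j + 4)) (Av H (j + 1))) => //.
    - by apply: neqA; lia.
    - by apply/orP; right; apply: nbBA; lia.
    - by apply/orP; right; apply: nbBA; lia.
  have n5 : Av H (j + 5) \notin D.
    apply/negP => x5; apply: (two (Bv H (j + 5)) (Av H (j + 4)) (Av H (j + 5))) => //.
    - by apply: neqA; lia.
    - by apply/orP; right; apply: nbBA; lia.
    - by apply/orP; right; apply: nbBA; lia.
  have n2 : Av H (j + 2) \notin D.
    apply/negP => x2; apply: (two (Bv H (j + 5)) (Av H (j + 4)) (Av H (j + 2))) => //.
    - by apply: neqA; lia.
    - by apply/orP; right; apply: nbBA; lia.
    - by apply/orP; right; apply: nbBA; lia.
  have n6 : Av H (j + 6) \notin D by have := no2 _ x4; rewrite -addnA.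
  have y6 : Bv H (j + 6) \in D.
    have [d dD hd] := dx (Bv H (j + 6)).
    have hj6 : 3 <= j + 6 by rewrite addnC (leq_trans _ (leq_addr j 6)).
    case: (nbB hj6 hd) => E; rewrite E in dD.
    - by [].
    - by rewrite dD in n6.
    - by move: dD; rewrite -addnBA // (negbTE n5).
    - by move: dD; rewrite -addnBA // (negbTE n3).
  have n3' : Bv H (j + 3) \notin D.
    apply/negP => y3; apply: (two (Av H (j + 3)) (Bv H (j + 6)) (Bv H (j + 3))) => //.
    - by have := @neqB n H (j + 3) 3 0 (lt 3 isT) (lt 0 isT) isT; rewrite addn0 -addnA.
    - by apply/orP; right; apply: nbAB; lia.
    - by apply/orP; right; apply: nbAB; lia.
  have [d dD hd] := dx (Bv H (j + 3)).
  have hj3 : 3 <= j + 3 by rewrite leq_addl.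
  case: (nbB hj3 hd) => E; rewrite E in dD.
  - by rewrite dD in n3'.
  - by rewrite dD in n3.
  - by move: dD; rewrite -addnBA // (negbTE n2).
  - by move: dD; rewrite addnK.
have iter t : forall j, Av H (j + 4 * t) \in D -> Av H j \in D.
  elim: t => [|t IH] j; first by rewrite muln0 addn0.
  by rewrite mulnS addnA => /IH; exact: down.
have [i xi] : exists i, Av H i \in D.
  case: (boolP [exists a : 'I_(n./2), Av H a \in D]) => [/existsP[a xa]|/existsPn nx].
    by exists a.
  exfalso.
  have nA : forall a, Av H a \notin D.
    by move=> a; have := nx (om H a); rewrite (@Av_eq n H (om H a) a) //= modn_mod.
  have yB j : 3 <= j -> Bv H j \in D.
    move=> hj; have [d dD hd] := dx (Bv H j).
    case: (nbB hj hd) => E; rewrite E in dD => //; by rewrite (negbTE (nA _)) in dD.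
  apply: (two (Av H 3) (Bv H 3) (Bv H 4)); rewrite ?yB //.
  - by have := @neqB n H 3 0 1 (lt 0 isT) (lt 1 isT) isT; rewrite addn0.
  - by apply/orP; right; apply: nbAB; lia.
  - by apply/orP; right; apply: nbAB; lia.
have := no2 i xi; rewrite (@Av_eq n H i (i + 2 + 4 * k)) in xi.
  by rewrite (iter k (i + 2) xi).
by rewrite -addnA (addnC 2) -Hm modnDr.
Qed.

Definition DS n (H : 0 < n./2) LA LB : {set knodel_vertex n} :=
  [set Av H (4 * t) | t : 'I_LA] :|: [set Bv H (4 * t + 2) | t : 'I_LB].

Lemma memA n (H : 0 < n./2) LA LB t : t < LA -> Av H (4 * t) \in DS H LA LB.
Proof.
move=> ht; rewrite /DS inE; apply/orP; left; apply/imsetP.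
by exists (Ordinal ht).
Qed.
Lemma memB n (H : 0 < n./2) LA LB t : t < LB -> Bv H (4 * t + 2) \in DS H LA LB.
Proof.
move=> ht; rewrite /DS inE; apply/orP; right; apply/imsetP.
by exists (Ordinal ht).
Qed.

Lemma card_DS n (H : 0 < n./2) LA LB : #|DS H LA LB| <= LA + LB.
Proof.
rewrite /DS; apply: leq_trans (leq_card_setU _ _) _.
by apply: leq_add; apply: leq_trans (leq_imset_card _ _) _; rewrite card_ord.
Qed.

Lemma memDS_A n (H : 0 < n./2) LA LB i : Av H i \in DS H LA LB -> i < n./2 ->
  4 * LA <= n./2 + 3 -> exists2 t, t < LA & i = 4 * t.
Proof.
rewrite /DS inE => /orP[] /imsetP [t _ E] hi hL; last by move: E; rewrite /Av /Bv => -[].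
exists t => //; have := Av_inj E; rewrite !modn_small //; have := ltn_ord t; lia.
Qed.
Lemma memDS_B n (H : 0 < n./2) LA LB i : Bv H i \in DS H LA LB -> i < n./2 ->
  4 * LB <= n./2 + 1 -> exists2 t, t < LB & i = 4 * t + 2.
Proof.
rewrite /DS inE => /orP[] /imsetP [t _ E] hi hL; first by move: E; rewrite /Av /Bv => -[].
exists t => //; have := Bv_inj E; rewrite !modn_small //; have := ltn_ord t; lia.
Qed.

Lemma vcases n (H : 0 < n./2) (P : knodel_vertex n -> Prop) :
  (forall a, a < n./2 -> P (Av H a)) -> (forall a, a < n./2 -> P (Bv H a)) ->
  forall v, P v.
Proof. by move=> hA hB [[] a]; [rewrite (BvE H); apply: hB | rewrite (AvE H); apply: hA]. Qed.

Lemma wrapAB n (H : 0 < n./2) i j : i + 3 = j + n./2 -> knodel_adj n 3 (Av H i) (Bv H j).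
Proof. by move=> E; rewrite adjAB /adjM E modnDr eqxx !orbT. Qed.

Lemma dec4 a : exists q, [\/ a = 4 * q, a = 4 * q + 1, a = 4 * q + 2 | a = 4 * q + 3].
Proof.
exists (a %/ 4); have := divn_eq a 4; have := ltn_pmod a (isT : 0 < 4).
case: (a %% 4) => [|[|[|[|//]]]] _ E;
  [apply: Or41 | apply: Or42 | apply: Or43 | apply: Or44]; lia.
Qed.

Definition domv n (D : {set knodel_vertex n}) v :=
  v \in D \/ exists2 d, d \in D & knodel_adj n 3 v d.

Lemma dom0 n (H : 0 < n./2) k : n./2 = 4 * k -> 0 < k ->
  dominating (knodel_adj n 3) setT (DS H k k).
Proof.
move=> Hm Hk; apply: domP; first exact: subsetT.
suff : forall v, domv (DS H k k) v by move=> h v _; exact: h.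
apply: (@vcases n H (domv (DS H k k))) => a ha; rewrite /domv; have [q [] E] := dec4 a.
- by left; rewrite E; apply: memA; lia.
- by right; exists (Bv H (4 * q + 2)); [apply: memB; lia | apply: nbAB; lia].
- by right; exists (Bv H (4 * q + 2)); [apply: memB; lia | apply: nbAB; lia].
- case: (ltnP q.+1 k) => hq.
    by right; exists (Bv H (4 * q.+1 + 2)); [apply: memB; lia | apply: nbAB; lia].
  by right; exists (Bv H (4 * 0 + 2)); [apply: memB; lia | apply: wrapAB; lia].
- by right; exists (Av H (4 * q)); [apply: memA; lia | apply: nbBA; lia].
- by right; exists (Av H (4 * q)); [apply: memA; lia | apply: nbBA; lia].
- by left; rewrite E; apply: memB; lia.
- by right; exists (Av H (4 * q)); [apply: memA; lia | apply: nbBA; lia].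
Qed.

Lemma dom3 n (H : 0 < n./2) k : n./2 = 4 * k + 3 ->
  dominating (knodel_adj n 3) setT (DS H k.+1 k.+1).
Proof.
move=> Hm; apply: domP; first exact: subsetT.
suff : forall v, domv (DS H k.+1 k.+1) v by move=> h v _; exact: h.
apply: (@vcases n H (domv (DS H k.+1 k.+1))) => a ha; rewrite /domv; have [q [] E] := dec4 a.
- by left; rewrite E; apply: memA; lia.
- by right; exists (Bv H (4 * q + 2)); [apply: memB; lia | apply: nbAB; lia].
- by right; exists (Bv H (4 * q + 2)); [apply: memB; lia | apply: nbAB; lia].
- by right; exists (Bv H (4 * q.+1 + 2)); [apply: memB; lia | apply: nbAB; lia].
- by right; exists (Av H (4 * q)); [apply: memA; lia | apply: nbBA; lia].
- by right; exists (Av H (4 * q)); [apply: memA; lia | apply: nbBA; lia].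
- by left; rewrite E; apply: memB; lia.
- by right; exists (Av H (4 * q)); [apply: memA; lia | apply: nbBA; lia].
Qed.

Definition D1 n (H : 0 < n./2) k := DS H k k :|: [set Av H (4 * k - 1)].

Lemma dom1 n (H : 0 < n./2) k : n./2 = 4 * k + 1 -> 0 < k ->
  dominating (knodel_adj n 3) setT (D1 H k).
Proof.
move=> Hm Hk; apply: domP; first exact: subsetT.
suff : forall v, domv (D1 H k) v by move=> h v _; exact: h.
have mA t : t < k -> Av H (4 * t) \in D1 H k.
  by move=> ht; rewrite /D1 inE memA.
have mB t : t < k -> Bv H (4 * t + 2) \in D1 H k.
  by move=> ht; rewrite /D1 inE memB.
have mX : Av H (4 * k - 1) \in D1 H k by rewrite /D1 !inE eqxx orbT.
apply: (@vcases n H (domv (D1 H k))) => a ha; rewrite /domv; have [q [] E] := dec4 a.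
- case: (ltnP q k) => hq; first by left; rewrite E; apply: mA.
  by right; exists (Bv H (4 * 0 + 2)); [apply: mB; lia | apply: wrapAB; lia].
- by right; exists (Bv H (4 * q + 2)); [apply: mB; lia | apply: nbAB; lia].
- by right; exists (Bv H (4 * q + 2)); [apply: mB; lia | apply: nbAB; lia].
- case: (ltnP q.+1 k) => hq.
    by right; exists (Bv H (4 * q.+1 + 2)); [apply: mB; lia | apply: nbAB; lia].
  by left; rewrite (_ : a = 4 * k - 1) //; lia.
- case: (ltnP q k) => hq.
    by right; exists (Av H (4 * q)); [apply: mA; lia | apply: nbBA; lia].
  by right; exists (Av H (4 * k - 1)) => //; apply: nbBA; lia.
- by right; exists (Av H (4 * q)); [apply: mA; lia | apply: nbBA; lia].
- by left; rewrite E; apply: mB; lia.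
- by right; exists (Av H (4 * q)); [apply: mA; lia | apply: nbBA; lia].
Qed.

Lemma dom2 n (H : 0 < n./2) k : n./2 = 4 * k + 2 -> 0 < k ->
  dominating (knodel_adj n 3) (setT :\ Av H (4 * k - 1)) (DS H k.+1 k).
Proof.
move=> Hm Hk; apply: domP.
  apply/subsetP => x xD; rewrite !inE andbT; apply/eqP => E; rewrite E in xD.
  have [t ht] := memDS_A xD (ltac:(lia)) (ltac:(lia)); lia.
suff : forall v, v != Av H (4 * k - 1) -> domv (DS H k.+1 k) v.
  by move=> h v /setD1P [hv _]; exact: h hv.
apply: (@vcases n H (fun v => v != Av H (4 * k - 1) -> domv (DS H k.+1 k) v)) => a ha hu;
  rewrite /domv; have [q [] E] := dec4 a.
- by left; rewrite E; apply: memA; lia.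
- case: (ltnP q k) => hq.
    by right; exists (Bv H (4 * q + 2)); [apply: memB; lia | apply: nbAB; lia].
  by right; exists (Bv H (4 * 0 + 2)); [apply: memB; lia | apply: wrapAB; lia].
- by right; exists (Bv H (4 * q + 2)); [apply: memB; lia | apply: nbAB; lia].
- case: (ltnP q.+1 k) => hq.
    by right; exists (Bv H (4 * q.+1 + 2)); [apply: memB; lia | apply: nbAB; lia].
  by move: hu; rewrite (_ : a = 4 * k - 1) ?eqxx //; lia.
- by right; exists (Av H (4 * q)); [apply: memA; lia | apply: nbBA; lia].
- by right; exists (Av H (4 * q)); [apply: memA; lia | apply: nbBA; lia].
- by left; rewrite E; apply: memB; lia.
- by right; exists (Av H (4 * q)); [apply: memA; lia | apply: nbBA; lia].
Qed.

Lemma notin_DS n (H : 0 < n./2) LA LB b : 2 <= n./2 -> 4 * LA <= n./2 + 3 ->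
  4 * LB <= n./2 + 1 -> (b, om H 1) \notin DS H LA LB.
Proof.
move=> h2 hA hB; apply/negP; case: b => hb.
- by have [t _] := memDS_B (i := 1) hb h2 hB; lia.
- by have [t _] := memDS_A (i := 1) hb h2 hA; lia.
Qed.

Unset Implicit Arguments.

Theorem corollary3p2 (n : nat) :
  8 <= n -> ~~ odd n ->
  (gamma_stable (knodel_adj n 3) [set: knodel_vertex n] <-> n %% 8 != 4).
Proof.
move=> H8 Hev.
have Hn : n = 2 * n./2 by lia.
have H : 0 < n./2 by lia.
have H4 : 4 <= n./2 by lia.
have cV := card_V n.
have cnt : forall V D, dominating (knodel_adj n 3) V D -> #|V| <= 4 * #|D|.
  by move=> V D; apply: dom_count; exact: nb4.
split.
- move=> Hst; apply/negP => /eqP H84.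
  have [k Hm] : exists k, n./2 = 4 * k + 2 by exists (n./2 %/ 4); lia.
  have Hk : 0 < k by lia.
  have := Hst _ (in_setT (Av H (4 * k - 1))).
  have le1 : gamma_on (knodel_adj n 3) ([set: knodel_vertex n] :\ Av H (4 * k - 1)) <= k.+1 + k.
    exact: leq_trans (gamma_le (dom2 H Hm Hk)) (card_DS _ _ _).
  have ge2 : 2 * k + 2 <= gamma_on (knodel_adj n 3) [set: knodel_vertex n].
    apply: gamma_ge; first by rewrite cV; lia.
    move=> D HD; have := cnt _ _ HD; rewrite cV => h.
    case: (ltnP (2 * k + 1) #|D|) => h2; first lia.
    exfalso; apply: (no_perfect H Hm Hk HD); rewrite cV; move: h h2; move: #|D| => x; lia.
  move=> E; move: le1 ge2; rewrite E; move: (gamma_on _ _) => g; lia.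
- move=> H84.
  have key : exists c (D0 : {set knodel_vertex n}),
      [/\ dominating (knodel_adj n 3) setT D0, #|D0| <= c,
          (forall b, (b, om H 1) \notin D0) &
          (forall x, (2 * n./2).-1 <= 4 * x -> c <= x)].
    have [q [] E] := dec4 (n./2).
    + exists (2 * q), (DS H q q); split.
      * by apply: dom0 => //; lia.
      * by apply: leq_trans (card_DS _ _ _) _; lia.
      * by move=> b; apply: notin_DS; lia.
      * by move=> x; lia.
    + exists (2 * q + 1), (D1 H q); split.
      * by apply: dom1 => //; lia.
      * apply: leq_trans (leq_card_setU _ _) _; rewrite cards1.
        by apply: leq_trans (leq_add (card_DS _ _ _) (leqnn 1)) _; lia.
      * move=> b; rewrite /D1 inE negb_or notin_DS ?andTb; try lia.
        rewrite inE; apply/negP; case: b => // /eqP /Av_inj; rewrite !modn_small; lia.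
      * by move=> x; lia.
    + by exfalso; move: H84; rewrite Hn E; apply/negP/negPn/eqP; lia.
    + exists (2 * q + 2), (DS H q.+1 q.+1); split.
      * exact: dom3.
      * by apply: leq_trans (card_DS _ _ _) _; lia.
      * by move=> b; apply: notin_DS; lia.
      * by move=> x; lia.
  have [c [D0 [HD0 cD0 nD0 lb]]] := key.
  have gG : gamma_on (knodel_adj n 3) [set: knodel_vertex n] = c.
    apply/eqP; rewrite eqn_leq; apply/andP; split.
      exact: leq_trans (gamma_le HD0) cD0.
    apply: gamma_ge; first by rewrite cV; apply: lb; lia.
    move=> D HD; apply: lb; have := cnt _ _ HD; rewrite cV; lia.
  move=> u _; rewrite gG.
  have h2 : 2 <= n./2 by apply: leq_trans H4.
  have [s hs] := sh_avoid h2 nD0 u.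
  have Ds := sh_dom H s HD0.
  apply/eqP; rewrite eqn_leq; apply/andP; split.
    apply: leq_trans (gamma_le (dom_del Ds hs)) _.
    exact: leq_trans (leq_imset_card _ _) cD0.
  apply: gamma_ge; first by rewrite card_Vu; apply: lb; lia.
  move=> D HD; apply: lb; have := cnt _ _ HD; rewrite card_Vu; lia.
Qed.
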